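(* Let $G$ be a finite abelian group and $A$ a finite dimensional $G$-graded algebra with a regular grading with bicharacter $\beta$ whose regular decomposition is minimal, and assume $A_0$ is a local algebra. If $J(A_0)\neq0$, then there exist a commutative local subalgebra $\mathscr{U}$ of $A$ (namely $\mathscr U=K+J(A_0)$) and a 2-cocycle $\alpha\in H^2(G,K^* )$ inducing $\beta$ such that $A\cong K^\alpha G\otimes\mathscr{U}$ as $G$-graded algebras, where $\mathscr U$ carries the trivial grading. If $J(A_0)=0$, then $A\cong K^\alpha G$ as $G$-graded algebras.
   Context: All algebras are associative with unit over an algebraically closed field $K$ of characteristic $0$; $G$ finite abelian, written additively, neutral element $0$. A $G$-graded algebra $A$ has a regular grading if (i) for every $n$ and every $(g_1,\dots,g_n)\in G^n$ there exist $a_i\in A_{g_i}$ with $a_1\cdots a_n\ne0$, and (ii) there is $\beta\colon G\times G\to K^*$ with $a_ga_h=\beta(g,h)a_ha_g$ for all homogeneous $a_g,a_h$ ($\beta$ = bicharacter). The regular decomposition is minimal if there do not exist $g\neq h$ with $\beta(x,g)=\beta(x,h)$ for all $x\in G$. A commutative algebra $S$ is local if $S/J(S)\cong K$, $J$ the Jacobson radical. For a 2-cocycle $\alpha$, $K^\alpha G$ has basis $\{X_g\}$ with $X_gX_h=\alpha(g,h)X_{g+h}$, graded by $(K^\alpha G)_g=KX_g$; $\alpha$ induces $\beta$ if $\beta(g,h)=\alpha(g,h)\alpha(h,g)^{-1}$. Trivial grading: $V_0=V$, $V_g=0$ for $g\ne0$; tensor products are graded by $(V\otimes W)_g=\bigoplus_{h+k=g}V_h\otimes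 W_k$. *)

(* Defs.v *)
From HB Require Import structures.
From mathcomp Require Import all_boot all_order all_algebra all_field.
Set Implicit Arguments. Unset Strict Implicit. Unset Printing Implicit Defensive.
Import GRing.Theory.
Local Open Scope ring_scope.

Definition graded (K : fieldType) (A : falgType K) (G : finZmodType)
    (Ag : G -> {vspace A}) : Prop :=
  [/\ directv (\sum_(g : G) Ag g)%VS,
      (\sum_(g : G) Ag g)%VS = fullv &
      forall (g h : G) (a b : A), a \in Ag g -> b \in Ag h -> a * b \in Ag (g + h)].

Definition regular_grading (K : fieldType) (A : falgType K) (G : finZmodType)
    (Ag : G -> {vspace A}) (beta : G -> G -> K) : Prop :=
  [/\ (forall (n : nat) (gs : 'I_n -> G),
         exists a : 'I_n -> A, (forall i, a i \in Ag (gs i)) /\ \prod_(i < n) a i != 0),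
      (forall g h : G, beta g h != 0) &
      (forall (g h : G) (a b : A), a \in Ag g -> b \in Ag h -> a * b = beta g h *: (b * a))].

Definition minimal_decomp (K : fieldType) (G : finZmodType) (beta : G -> G -> K) : Prop :=
  ~ (exists g h : G, g != h /\ forall x : G, beta x g = beta x h).

Definition subalgebra (K : fieldType) (A : falgType K) (S : A -> Prop) : Prop :=
  [/\ S 1,
      (forall x y, S x -> S y -> S (x + y)),
      (forall (c : K) x, S x -> S (c *: x)) &
      (forall x y, S x -> S y -> S (x * y))].

Definition left_ideal_in (K : fieldType) (A : falgType K) (S : A -> Prop)
    (M : {vspace A}) : Prop :=
  (forall m, m \in M -> S m) /\ (forall s m, S s -> m \in M -> s * m \in M).

Definition maximal_left_ideal (K : fieldType) (A : falgType K) (S : A -> Prop)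
    (M : {vspace A}) : Prop :=
  [/\ left_ideal_in S M,
      (exists s, S s /\ s \notin M) &
      (forall N : {vspace A}, left_ideal_in S N -> (M <= N)%VS ->
          N = M \/ (forall s, S s -> s \in N))].

Definition jacobson (K : fieldType) (A : falgType K) (S : A -> Prop) (x : A) : Prop :=
  S x /\ forall M : {vspace A}, maximal_left_ideal S M -> x \in M.

(* A commutative algebra S is local if S / J(S) = K, i.e. the natural map
   K -> S -> S/J(S) is onto: every element of S is a scalar modulo J(S). *)
Definition local_alg (K : fieldType) (A : falgType K) (S : A -> Prop) : Prop :=
  (forall x y, S x -> S y -> x * y = y * x) /\
  (forall x, S x -> exists c : K, jacobson S (x - c%:A)).

Definition cocycle (K : fieldType) (G : finZmodType) (alpha : G -> G -> K) : Prop :=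
  (forall g h, alpha g h != 0) /\
  (forall g h k, alpha g h * alpha (g + h) k = alpha h k * alpha g (h + k)).

Definition induces (K : fieldType) (G : finZmodType) (alpha beta : G -> G -> K) : Prop :=
  forall g h, beta g h = alpha g h / alpha h g.

(* Model of K^alpha G (x) U for a commutative subalgebra U of A:
   sum_g X_g (x) u_g  <->  the function g |-> u_g with values in U;
   (X_g (x) u)(X_h (x) v) = alpha(g,h) X_(g+h) (x) uv.
   Degree g component: functions supported on {g}. *)
Definition twmul (K : fieldType) (A : falgType K) (G : finZmodType)
    (alpha : G -> G -> K) (f f' : {ffun G -> A}) : {ffun G -> A} :=
  [ffun k => \sum_(g : G) alpha g (k - g) *: (f g * f' (k - g))].

Definition graded_iso_tensor (K : fieldType) (A : falgType K) (G : finZmodType)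
    (Ag : G -> {vspace A}) (alpha : G -> G -> K) (U : A -> Prop) : Prop :=
  exists phi : {ffun G -> A} -> A,
  [/\ (forall (c : K) (f f' : {ffun G -> A}), (forall g, U (f g)) -> (forall g, U (f' g)) ->
          phi [ffun g => c *: f g + f' g] = c *: phi f + phi f'),
      (forall f f' : {ffun G -> A}, (forall g, U (f g)) -> (forall g, U (f' g)) ->
          phi (twmul alpha f f') = phi f * phi f'),
      (forall f f' : {ffun G -> A}, (forall g, U (f g)) -> (forall g, U (f' g)) ->
          phi f = phi f' -> f = f'),
      (forall a : A, exists f : {ffun G -> A}, (forall g, U (f g)) /\ phi f = a) &
      (forall (g : G) (f : {ffun G -> A}), (forall h, U (f h)) -> (forall h, h != g -> f h = 0) ->
          phi f \in Ag g)].

(* Model of the twisted group algebra K^alpha G: sum_g c_g X_g <-> g |-> c_g. *)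
Definition twmulK (K : fieldType) (G : finZmodType) (alpha : G -> G -> K)
    (f f' : {ffun G -> K}) : {ffun G -> K} :=
  [ffun k => \sum_(g : G) alpha g (k - g) * (f g * f' (k - g))].

Definition graded_iso_twisted (K : fieldType) (A : falgType K) (G : finZmodType)
    (Ag : G -> {vspace A}) (alpha : G -> G -> K) : Prop :=
  exists phi : {ffun G -> K} -> A,
  [/\ (forall (c : K) (f f' : {ffun G -> K}), phi [ffun g => c * f g + f' g] = c *: phi f + phi f'),
      (forall f f' : {ffun G -> K}, phi (twmulK alpha f f') = phi f * phi f'),
      (forall f f' : {ffun G -> K}, phi f = phi f' -> f = f'),
      (forall a : A, exists f : {ffun G -> K}, phi f = a) &
      (forall (g : G) (f : {ffun G -> K}), (forall h, h != g -> f h = 0) -> phi f \in Ag g)].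

(* Main.v *)
Require Import Defs.
From HB Require Import structures.
From mathcomp Require Import all_boot all_order all_algebra all_field.
From mathcomp Require Import fingroup cyclic ring zify.
From Stdlib Require Import Classical FunctionalExtensionality PropExtensionality.
Set Implicit Arguments. Unset Strict Implicit. Unset Printing Implicit Defensive.
Import GRing.Theory.
Local Open Scope ring_scope.
Lemma binom2 (R : comNzRingType) (x y : R) n : exists t, (x + y) ^+ n = x ^+ n + y * x ^+ n.-1 *+ n + y ^+ 2 * t.
Proof.
elim: n => [|n [t IH]]; first by exists 0; rewrite !expr0 mulr0n mulr0 !addr0.
case: n IH => [|n] IH.
  by exists 0; rewrite !expr1 expr0 mulr1 mulr0 addr0.
exists (x ^+ n *+ n.+1 + t * x + y * t).
rewrite exprSr IH /= (exprS x n.+1) (exprS x n).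
move: (x ^+ n) (n.+1) => z N.
rewrite mulrS -[y * z *+ N]mulr_natr -[y * (x * z) *+ N]mulr_natr -[z *+ N]mulr_natr.
move: (N%:R) => c; ring.
Qed.

Lemma ordG (G : finZmodType) (g : G) : g *+ #|G| = 0.
Proof.
have := @expg_cardG G [set: G] g (in_setT g).
by rewrite cardsT FinRing.zmodXgE.
Qed.

Section Basics.
Variables (K : fieldType) (G : finZmodType) (A : falgType K) (Ag : G -> {vspace A}).
Hypothesis grA : graded Ag.

Lemma gr_mul g h a b : a \in Ag g -> b \in Ag h -> a * b \in Ag (g + h).
Proof. by case: grA => _ _; apply. Qed.

Lemma gr_dec a : exists f : G -> A, (forall g, f g \in Ag g) /\ a = \sum_g f g.
Proof.
case: grA => _ full _.
have : a \in (\sum_g Ag g)%VS by rewrite full memvf.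
by case/memv_sumP => f Hf ->; exists f; split => // g; apply: Hf.
Qed.

Lemma gr_ind (f : G -> A) : (forall g, f g \in Ag g) -> \sum_g f g = 0 -> forall g, f g = 0.
Proof.
case: grA => dir _ _ Hf H0 g.
by move/directv_sum_independent: dir => /(_ f (fun i _ => Hf i) H0 g isT).
Qed.

Lemma sum_shift (F : G -> A) h : \sum_k F (k - h) = \sum_k F k.
Proof. by rewrite [RHS](reindex_inj (can_inj (subrK h))). Qed.

Lemma one_A0 : 1 \in Ag 0.
Proof.
have [e [He Hsum]] := gr_dec 1.
have key : forall h a, a \in Ag h -> e 0 * a = a.
  move=> h a Ha.
  pose f k := e (k - h) * a - (if k == h then a else 0).
  have Hf k : f k \in Ag k.
    rewrite /f memvB //; first by have := gr_mul (He (k - h)) Ha; rewrite subrK.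
    by case: eqP => [->|_]; rewrite ?mem0v.
  have Hs : \sum_k f k = 0.
    rewrite /f sumrB -big_distrl /= (sum_shift e h) -Hsum mul1r.
    by rewrite (bigD1 h) //= eqxx big1 ?addr0 ?subrr // => k /negPf ->.
  by have := gr_ind Hf Hs h; rewrite /f subrr eqxx => /eqP; rewrite subr_eq0 => /eqP.
have : e 0 * 1 = 1.
  rewrite {2}Hsum {1}Hsum mulr_sumr; apply: eq_bigr => g _.
  by rewrite (key g).
by rewrite mulr1 => <-.
Qed.

Lemma A0M a b : a \in Ag 0 -> b \in Ag 0 -> a * b \in Ag 0.
Proof. by move=> Ha Hb; have := gr_mul Ha Hb; rewrite addr0. Qed.

Lemma homX x g k : x \in Ag g -> x ^+ k \in Ag (g *+ k).
Proof.
move=> Hx; elim: k => [|k IH]; first by rewrite expr0 mulr0n one_A0.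
by rewrite exprSr mulrSr gr_mul.
Qed.

Variable beta : G -> G -> K.
Hypothesis regA : regular_grading Ag beta.

Lemma nonzero_hom g : exists a, a \in Ag g /\ a != 0.
Proof.
case: regA => R1 _ _.
have [a [Ha Hp]] := R1 1%N (fun _ => g).
by exists (a ord0); split => //; rewrite big_ord1 in Hp.
Qed.

Lemma comm_hom g h a b : a \in Ag g -> b \in Ag h -> a * b = beta g h *: (b * a).
Proof. by case: regA => _ _; apply. Qed.

Lemma beta0 h : beta 0 h = 1.
Proof.
have [b [Hb nb]] := nonzero_hom h.
have := comm_hom one_A0 Hb; rewrite mul1r mulr1 => /eqP.
rewrite -subr_eq0 -{1}(scale1r b) -scalerBl scaler_eq0 (negPf nb) orbF subr_eq0.
by move/eqP.
Qed.

Lemma central a b h : a \in Ag 0 -> b \in Ag h -> a * b = b * a.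
Proof. by move=> Ha Hb; rewrite (comm_hom Ha Hb) beta0 scale1r. Qed.

End Basics.
Lemma coef0X (K : fieldType) (p : {poly K}) k : (p ^+ k)`_0 = p`_0 ^+ k.
Proof. by elim: k => [|k IH]; rewrite ?expr0 ?coef1 // !exprS coef0M IH. Qed.

Lemma poly_root (K : fieldType) n M : (0 < n)%N -> (n%:R : K) != 0 ->
  exists p : {poly K}, p`_0 = 1 /\ exists q, p ^+ n - (1 + 'X) = 'X^(M.+1) * q.
Proof.
move=> n0 nK; elim: M => [|M [p [p0 [q Hq]]]].
  exists 1; split; first by rewrite coef1.
  by exists (-1); rewrite expr1n expr1 mulrN1 opprD addrA subrr add0r.
pose a := q`_0; pose d := a / n%:R; pose D := d%:P.
pose y := - (D * 'X^(M.+1)).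
have [t Ht] := binom2 p y n.
have HD : D * n%:R = a%:P by rewrite /D -polyC_natr -polyCM /d divfK.
pose r := q - a%:P * p ^+ n.-1 + D ^+ 2 * 'X^(M.+1) * t.
have Er : (p + y) ^+ n - (1 + 'X) = 'X^(M.+1) * r.
  have Hpn : p ^+ n = 1 + 'X + 'X^(M.+1) * q by rewrite -Hq addrC subrK.
  rewrite Ht Hpn /r -HD /y -mulr_natr.
  move: ('X^(M.+1)) (p ^+ n.-1) (n%:R : {poly K}) => X1 P N.
  ring.
have r0 : r`_0 = 0.
  rewrite /r coefD coefB !coef0M !coef0X p0 expr1n coefC coefX /= mulr1 expr0n /=.
  by rewrite mulr0 mul0r addr0 subrr.
exists (p + y); split.
  by rewrite coefD p0 /y coefN coef0M coefXn /= mulr0 oppr0 addr0.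
exists (drop_poly 1 r).
have Hr : r = drop_poly 1 r * 'X.
  rewrite -{1}(poly_take_drop 1 r) expr1.
  suff -> : take_poly 1 r = 0 by rewrite add0r.
  by apply/polyP => i; rewrite coef_take_poly coef0; case: i => [|i] //=.
by rewrite Er {1}Hr mulrA mulrAC -exprSr.
Qed.
Section Maximal.
Variables (K : fieldType) (A : falgType K).

Lemma vs_maximal (Pr : {vspace A} -> Prop) I : Pr I ->
  exists M, [/\ Pr M, (I <= M)%VS & forall N, Pr N -> (M <= N)%VS -> N = M].
Proof.
suff H : forall k I, (\dim (fullv : {vspace A}) - \dim I <= k)%N -> Pr I ->
  exists M, [/\ Pr M, (I <= M)%VS & forall N, Pr N -> (M <= N)%VS -> N = M].
  by apply: H.
elim=> [|k IH] {}I Hk PI.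
  exists I; split => // N _ sIN; apply/eqP; rewrite eq_sym eqEdim sIN /=.
  apply: leq_trans (dimvS (subvf N)) _.
  by rewrite -subn_eq0; apply/eqP/eqP; rewrite -leqn0.
case: (classic (exists N, [/\ Pr N, (I <= N)%VS & N != I])).
  case=> N [PN sIN nNI].
  have ltIN : (\dim I < \dim N)%N.
    by rewrite (ltn_leqif (dimv_leqif_eq sIN)) eq_sym.
  have Hk' : (\dim (fullv : {vspace A}) - \dim N <= k)%N.
    have := dimvS (subvf N).
    move: Hk ltIN; move: (\dim I) (\dim N) (\dim (fullv : {vspace A})) => a b c; lia.
  have [M [PM sNM HM]] := IH N Hk' PN.
  by exists M; split => //; exact: subv_trans sIN sNM.
move=> nex; exists I; split => // N PN sIN.
by apply/eqP; apply/negPn/negP => nNI; apply: nex; exists N.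
Qed.

End Maximal.

Section Jac.
Variables (K : fieldType) (G : finZmodType) (A : falgType K) (Ag : G -> {vspace A}).
Hypothesis grA : graded Ag.
Let S := fun x : A => x \in Ag 0.
Hypothesis locA : local_alg S.

Lemma A0C x y : x \in Ag 0 -> y \in Ag 0 -> x * y = y * x.
Proof. by case: locA => H _; apply: H. Qed.

Definition lid (M : {vspace A}) := left_ideal_in S M.

Lemma lid_1 M : lid M -> 1 \in M -> forall s, s \in Ag 0 -> s \in M.
Proof. by case=> _ H H1 s Hs; rewrite -(mulr1 s); apply: H. Qed.

Lemma max_proper M : maximal_left_ideal S M -> 1 \notin M.
Proof.
case=> HM [s [Ss nsM]] _; apply/negP => H1.
by move/negP: nsM; apply; apply: lid_1 HM H1 s Ss.
Qed.

Lemma exists_max I : lid I -> 1 \notin I -> exists M, maximal_left_ideal S M /\ (I <= M)%VS.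
Proof.
move=> HI nI.
have [M [[HM nM] sIM Mmax]] := @vs_maximal _ _ (fun N => lid N /\ 1 \notin N) I (conj HI nI).
exists M; split => //; split => //.
  by exists 1; split => //; exact: one_A0 grA.
move=> N HN sMN.
case: (boolP (1 \in N)) => H1.
  by right; apply: lid_1.
by left; apply: Mmax.
Qed.

Lemma memJ M : maximal_left_ideal S M -> forall x, x \in M <-> jacobson S x.
Proof.
move=> maxM x; split; last by case=> _; apply.
move=> xM.
have Sx : S x by case: maxM => [[H _]] _ _; apply: H.
case: locA => _ /(_ x Sx) [c [Sxc Jxc]].
have xcM : x - c%:A \in M by apply: Jxc.
case: (eqVneq c 0) => [c0|cn0].
  by split => // M' /Jxc; rewrite c0 scale0r subr0.
have : 1 \in M.
  have : c%:A \in M by rewrite -[c%:A](subKr x) memvB.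
  by move/(memvZ c^-1); rewrite scalerA mulVf // scale1r.
by move: (max_proper maxM) => /negP.
Qed.

Variable Jv : {vspace A}.
Hypothesis maxJ : maximal_left_ideal S Jv.

Lemma J_sub x : x \in Jv -> x \in Ag 0.
Proof. by case: maxJ => [[H _]] _ _; apply: H. Qed.

Lemma J_lmul s x : s \in Ag 0 -> x \in Jv -> s * x \in Jv.
Proof. by case: maxJ => [[_ H]] _ _; apply: H. Qed.

Lemma J_rmul s x : s \in Ag 0 -> x \in Jv -> x * s \in Jv.
Proof. by move=> Hs Hx; rewrite (A0C (J_sub Hx) Hs); apply: J_lmul. Qed.

Lemma one_notJ : 1 \notin Jv.
Proof. exact: max_proper. Qed.

Lemma scalJ c : c%:A \in Jv -> c = 0.
Proof.
move=> Hc; apply/eqP/negP => /negP cn0.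
move/negP: one_notJ; apply.
by have := memvZ c^-1 Hc; rewrite scalerA mulVf // scale1r.
Qed.

Lemma epsJ x : x \in Ag 0 -> exists c, x - c%:A \in Jv.
Proof.
move=> Sx; case: locA => _ /(_ x Sx) [c Jc]; exists c.
by apply/(memJ maxJ).
Qed.

Lemma unit_A0 x : x \in Ag 0 -> x \notin Jv -> exists y, y \in Ag 0 /\ x * y = 1.
Proof.
move=> Sx nJx.
pose I := (amull x @: Ag 0%R)%VS.
have memI m : m \in I -> exists2 s, s \in Ag 0 & m = x * s.
  by case/memv_imgP => s Hs ->; exists s => //; rewrite lfunE.
have HI : lid I.
  split.
    by move=> m /memI [s Hs ->]; apply: (A0M grA).
  move=> s m Ss /memI [t Ht ->].
  rewrite mulrA (A0C Ss Sx) -mulrA.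
  have -> : x * (s * t) = amull x (s * t) by rewrite lfunE.
  by apply: memv_img; apply: (A0M grA).
case: (boolP (1 \in I)) => [/memI [s Hs e]|n1].
  by exists s.
have [M [maxM sIM]] := exists_max HI n1.
have : x \in M.
  apply: (subvP sIM).
  have -> : x = amull x 1 by rewrite lfunE /= mulr1.
  by apply: memv_img; apply: (one_A0 grA).
by move/(memJ maxM)/(memJ maxJ) => xJ; rewrite xJ in nJx.
Qed.


Definition ideal (P : {vspace A}) := (P <= Ag 0%R)%VS /\ (Ag 0%R * P <= P)%VS.

Lemma lid_max_J M : maximal_left_ideal S M -> forall x, x \in M -> x \in Jv.
Proof. by move=> maxM x /(memJ maxM) /(memJ maxJ). Qed.

Lemma nakayama P : ideal P -> (P <= Jv * P)%VS -> P = 0%VS.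
Proof.
move=> [sP0 iP] sPJP.
apply/eqP/negPn/negP => nP0.
have I0 : ideal 0%VS.
  split; first exact: sub0v.
  by apply/prodvP => u v _; rewrite memv0 => /eqP ->; rewrite mulr0 mem0v.
have n0P : (0%VS != P) by rewrite eq_sym.
have [Q [[[sQ0 iQ] [sQP nQP]] _ Qmax]] := @vs_maximal _ _
  (fun Q => ideal Q /\ (Q <= P)%VS /\ Q != P) 0%VS
  (conj I0 (conj (sub0v _) n0P)).
have claim : forall x, x \in P -> forall j, j \in Jv -> j * x \in Q.
  move=> x xP j jJ.
  case: (boolP (x \in Q)) => xQ.
    by apply: (subvP iQ); apply: memv_mul => //; apply: J_sub.
  pose ann := (Ag 0%R :&: (amulr x @^-1: Q))%VS.
  have memann a : (a \in ann) = (a \in Ag 0) && (a * x \in Q).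
    by rewrite memv_cap -memv_preim lfunE.
  suff maxann : maximal_left_ideal S ann.
    by have := (memJ maxann j).2 ((memJ maxJ j).1 jJ); rewrite memann => /andP[].
  have lidann : lid ann.
    split; first by move=> m; rewrite memann => /andP[].
    move=> s m Ss; rewrite !memann => /andP[Sm mxQ].
    rewrite (A0M grA Ss Sm) /= -mulrA.
    by apply: (subvP iQ); apply: memv_mul.
  split => //.
    by exists 1; split; [exact: (one_A0 grA)| rewrite memann mul1r (negPf xQ) andbF].
  move=> N HN sannN.
  case: (boolP (N <= ann)%VS) => sNann; first by left; apply/eqP; rewrite eqEsubv sNann.
  right.
  have [a aN naann] := subvPn sNann.
  have Sa : a \in Ag 0 by case: HN => H _; apply: H.
  have naxQ : a * x \notin Q by rewrite memann Sa in naann.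
  have axP : a * x \in P by apply: (subvP iP); apply: memv_mul.
  pose Q' := (Q + amulr (a * x) @: Ag 0%R)%VS.
  have memimg y : y \in (amulr (a * x) @: Ag 0%R)%VS -> exists2 s, s \in Ag 0 & y = s * (a * x).
    by case/memv_imgP => s Hs ->; exists s => //; rewrite lfunE.
  have sQ'P : (Q' <= P)%VS.
    rewrite subv_add sQP /=; apply/subvP => y /memimg [s Ss ->].
    by apply: (subvP iP); apply: memv_mul.
  have iQ' : ideal Q'.
    split; first by apply: subv_trans sQ'P sP0.
    apply/prodvP => t w St /memv_addP [q qQ [y /memimg [s Ss ->] ->]].
    rewrite mulrDr mulrA; apply: memv_add.
      by apply: (subvP iQ); apply: memv_mul.
    have -> : t * s * (a * x) = amulr (a * x) (t * s) by rewrite lfunE.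
    by apply: memv_img; apply: (A0M grA).
  have axQ' : a * x \in Q'.
    rewrite -[a * x]add0r; apply: memv_add; first exact: mem0v.
    have e1 : amulr (a * x) 1 = a * x by rewrite lfunE /= mul1r.
    by rewrite -{1}e1; apply: memv_img; apply: (one_A0 grA).
  have Q'P : Q' = P.
    apply/eqP/negPn/negP => nQ'P.
    have := Qmax Q' (conj iQ' (conj sQ'P nQ'P)) (addvSl _ _).
    by move=> e; rewrite e (negPf naxQ) in axQ'.
  have : x \in Q' by rewrite Q'P.
  case/memv_addP => q qQ [y /memimg [s Ss ->] ex].
  have H1 : 1 - s * a \in ann.
    rewrite memann memvB ?(one_A0 grA) ?(A0M grA) //=.
    by rewrite mulrBl mul1r -mulrA {1}ex addrK.
  have H2 : s * a \in N by case: HN => _; apply.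
  have : 1 \in N by rewrite -(subrK (s * a) 1) memvD // (subvP sannN).
  by apply: lid_1.
have : (P <= Q)%VS.
  apply: subv_trans sPJP _; apply/prodvP => j x jJ xP; exact: claim.
by move=> sPQ; move: nQP; rewrite eqEsubv sPQ sQP.
Qed.

Lemma ideal_J : ideal Jv.
Proof.
split; first by apply/subvP => x; apply: J_sub.
by apply/prodvP => s x Ss xJ; apply: J_lmul.
Qed.

Lemma Pk_props k : (Jv ^+ k.+1 <= Jv)%VS /\ ideal (Jv ^+ k.+1)%VS.
Proof.
have [sJ0 iJ] := ideal_J.
elim: k => [|k [IH1 [IH2 IH3]]]; first by rewrite expv1; split; [exact: subvv| exact: ideal_J].
rewrite expvSl; split; last split.
- apply: subv_trans iJ; apply: prodvS => //.
- by apply: subv_trans IH2; apply: subv_trans (prodvSl _ sJ0) IH3.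
- by rewrite prodvA; apply: prodvSl.
Qed.

Lemma nilJ : exists m, (Jv ^+ m = 0)%VS.
Proof.
pose P k := (Jv ^+ k.+1)%VS.
have dec k : (P k.+1 <= P k)%VS.
  have [_ [_ iP]] := Pk_props k.
  rewrite /P expvSl; apply: subv_trans iP; apply: prodvSl; exact: (ideal_J).1.
have [k Hk] : exists k, P k.+1 = P k.
  apply: NNPP => nex.
  have H : forall k, (\dim (P k) + k <= \dim (P 0))%N.
    elim=> [|k IH]; first by rewrite addn0.
    have lt : (\dim (P k.+1) < \dim (P k))%N.
      rewrite (ltn_leqif (dimv_leqif_eq (dec k))).
      by apply/negP => /eqP e; apply: nex; exists k.
    move: IH lt; move: (\dim (P k.+1)) (\dim (P k)) => a b. lia.
  by have := H (\dim (P 0)).+1; rewrite addnS ltnNge leq_addl.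
exists k.+1; apply: nakayama; first by case: (Pk_props k).
by rewrite -expvSl; move: Hk; rewrite /P => ->.
Qed.

Lemma nilJ_elt : exists m, forall e, e \in Jv -> e ^+ m = 0.
Proof.
have [m Hm] := nilJ; exists m => e eJ.
have : (<[e]> ^+ m <= Jv ^+ m)%VS by apply: expvS; rewrite -memvE.
by rewrite expv_line Hm -memvE memv0 => /eqP.
Qed.


Variable beta : G -> G -> K.
Hypothesis regA : regular_grading Ag beta.

Lemma hom_unit g : exists u v, [/\ u \in Ag g, v \in Ag (- g), u * v = 1 & v * u = 1].
Proof.
have [m Hm] := nilJ.
case: (classic (exists a b, [/\ a \in Ag g, b \in Ag (- g) & a * b \notin Jv])).
  case=> a [b [Ha Hb nab]].
  have Sab : a * b \in Ag 0 by have := gr_mul grA Ha Hb; rewrite addrN.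
  have [y [Sy e]] := unit_A0 Sab nab.
  exists a, (b * y).
  have Hv : b * y \in Ag (- g) by have := gr_mul grA Hb Sy; rewrite addr0.
  have uv : a * (b * y) = 1 by rewrite mulrA.
  split => //.
  rewrite (comm_hom regA Hv Ha) uv.
  have an0 : a != 0 by apply/eqP => a0; move: uv; rewrite a0 mul0r => /eqP; rewrite eq_sym oner_eq0.
  suff -> : beta (- g) g = 1 by rewrite scale1r.
  have : a * (b * y * a) = a by rewrite mulrA uv mul1r.
  rewrite (comm_hom regA Hv Ha) uv -scalerAr mulr1 => /eqP.
  rewrite -subr_eq0 -{2}(scale1r a) -scalerBl scaler_eq0 (negPf an0) orbF subr_eq0.
  by move/eqP.
move=> nex.
have sW : (Ag g * Ag (- g) <= Jv)%VS.
  apply/prodvP => a b Ha Hb; apply: NNPP => /negP nab; apply: nex; exists a, b; split => //.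
case: regA => R1 _ _.
pose gs := fun i : 'I_(m.*2).+1 => if odd i then - g else g.
have [a [Ha Hp]] := R1 (m.*2).+1 gs.
pose b i := a (inord i).
have Hb i : (i < (m.*2).+1)%N -> b i \in Ag (if odd i then - g else g).
  by move=> lti; have := Ha (inord i); rewrite /gs inordK.
have key : forall k, (k <= m)%N -> \prod_(i < k.*2) b i \in ((Ag g * Ag (- g)) ^+ k)%VS.
  elim=> [|k IH] le; first by rewrite big_ord0 expv0 memv_line.
  rewrite doubleS !big_ord_recr /= -mulrA expvSr; apply: memv_mul.
    by apply: IH; apply: ltnW.
  apply: memv_mul.
    have lt1 : (k.*2 < (m.*2).+1)%N by rewrite ltnS leq_double; apply: ltnW.
    by have := Hb (k.*2) lt1; rewrite odd_double.
  have lt2 : ((k.*2).+1 < (m.*2).+1)%N by rewrite ltnS ltn_double.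
  by have := Hb (k.*2).+1 lt2; rewrite /= odd_double.
move: Hp; rewrite big_ord_recr /=.
have -> : \prod_(i < m.*2) a (widen_ord (leqnSn (m.*2)) i) = \prod_(i < m.*2) b i.
  apply: eq_bigr => i _; rewrite /b; congr a; apply: val_inj => /=.
  by rewrite inordK // ltnS ltnW.
have : \prod_(i < m.*2) b i \in (Jv ^+ m)%VS.
  by apply: (subvP (expvS m sW)); apply: key.
by rewrite Hm memv0 => /eqP ->; rewrite mul0r eqxx.
Qed.
Lemma horner_A0 e p : e \in Ag 0 -> horner_alg e p \in Ag 0.
Proof.
move=> He; elim/poly_ind: p => [|p c IH]; first by rewrite rmorph0 mem0v.
rewrite rmorphD rmorphM /= horner_algX horner_algC memvD ?(A0M grA) //.
by apply: memvZ; apply: (one_A0 grA).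
Qed.

Lemma A0X x k : x \in Ag 0 -> x ^+ k \in Ag 0.
Proof. by move=> Hx; have := homX grA k Hx; rewrite mul0rn. Qed.

Lemma J_pow x k : x \in Jv -> x ^+ k.+1 \in Jv.
Proof. by move=> Hx; rewrite exprSr; apply: J_lmul => //; apply: A0X; apply: J_sub. Qed.

Lemma root_exists n e : (0 < n)%N -> (n%:R : K) != 0 -> e \in Jv ->
  exists r, [/\ r \in Ag 0, r \notin Jv & r ^+ n = 1 + e].
Proof.
move=> n0 nK eJ.
have [m Hm] := nilJ_elt.
have [p [p0 [q Hq]]] := poly_root m n0 nK.
have He : horner_alg e (p ^+ n - (1 + 'X)) = 0.
  by rewrite Hq rmorphM rmorphXn /= horner_algX exprSr Hm // mul0r mul0r.
move: He; rewrite rmorphB rmorphXn rmorphD rmorph1 /= horner_algX => /eqP.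
rewrite subr_eq0 => /eqP He.
exists (horner_alg e p); split => //; first by apply: horner_A0; apply: J_sub.
apply/negP => rJ.
case: n n0 He {nK Hq} => // n _ He.
have := J_pow n rJ; rewrite He => H1.
have : (1 + e) - e \in Jv by apply: memvB.
by rewrite addrK; apply/negP; apply: one_notJ.
Qed.

Lemma unitJ x : x \in Jv -> forall y, y \in Ag 0 -> x * y = 1 -> False.
Proof.
move=> xJ y Hy e; have := J_rmul Hy xJ; rewrite e.
by apply/negP; apply: one_notJ.
Qed.

Lemma eps_decomp x : x \in Ag 0 -> x \notin Jv ->
  exists c, c != 0 /\ c^-1 *: x - 1 \in Jv.
Proof.
move=> Sx nJx; have [c Hc] := epsJ Sx.
have cn0 : c != 0.
  by apply/eqP => c0; move: Hc; rewrite c0 scale0r subr0 => Hc; rewrite Hc in nJx.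
exists c; split => //.
have -> : c^-1 *: x - 1 = c^-1 *: (x - c%:A) by rewrite scalerBr scalerA mulVf // scale1r.
exact: memvZ.
Qed.

Lemma scalar_pow n x t : (0 < n)%N -> (n%:R : K) != 0 -> x \in Ag 0 -> x \notin Jv ->
  x ^+ n = t%:A -> exists l, x = l%:A.
Proof.
move=> n0 nK Sx nJx Hxn.
have [c [cn0 Hj]] := eps_decomp Sx nJx.
set j := c^-1 *: x - 1 in Hj.
have Sj : j \in Ag 0 by apply: J_sub.
have Ej : j + 1 = c^-1 *: x by rewrite /j subrK.
case: n n0 nK Hxn => // n' _ nK Hxn.
pose z := \sum_(i < n'.+1) j ^+ i *+ 'C(n'.+1, i.+1).
have Hz : (j + 1) ^+ n'.+1 = 1 + j * z.
  rewrite exprD1n big_ord_recl /= expr0 bin0 mulr1n; congr (_ + _).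
  rewrite /z mulr_sumr; apply: eq_bigr => i _.
  by rewrite /bump /= add1n mulrnAr -exprS.
have Sz : z \in Ag 0.
  by apply: memv_suml => i _; apply: rpredMn; apply: A0X.
have jz : j * z = ((c^-1 ^+ n'.+1 * t) - 1)%:A.
  apply: (addrI 1); rewrite -Hz Ej exprZn Hxn scalerA.
  by rewrite scalerBl scale1r addrC subrK.
have jz0 : j * z = 0.
  have := J_rmul Sz Hj; rewrite jz => /scalJ ->.
  by rewrite scale0r.
have nJz : z \notin Jv.
  apply/negP => zJ.
  have Hw : z - (n'.+1%:R : K)%:A \in Jv.
    rewrite /z big_ord_recl /= expr0 bin1 scaler_nat addrC addKr.
    apply: memv_suml => i _; apply: rpredMn.
    by rewrite exprS; apply: J_rmul => //; apply: A0X.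
  have := memvB zJ Hw; rewrite subKr => /scalJ e.
  by rewrite e eqxx in nK.
have [w [Sw zw]] := unit_A0 Sz nJz.
have j0 : j = 0 by rewrite -[j]mulr1 -zw mulrA jz0 mul0r.
exists c.
have : c *: (c^-1 *: x) = c *: (j + 1) by rewrite Ej.
by rewrite scalerA divff // scale1r j0 add0r.
Qed.

Lemma skew_pow x y g h : x \in Ag g -> y \in Ag h ->
  forall k, exists gam, (x * y) ^+ k = gam *: (x ^+ k * y ^+ k).
Proof.
move=> Hx Hy; elim=> [|k [gam IH]]; first by exists 1; rewrite !expr0 mulr1 scale1r.
exists (gam * beta (h *+ k) g).
rewrite exprSr IH -scalerAl !mulrA -(mulrA (x ^+ k)).
rewrite (comm_hom regA (homX grA k Hy) Hx) -scalerAr -scalerAl scalerA.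
by rewrite !mulrA -exprSr -mulrA -exprSr.
Qed.
Hypothesis charK : [pchar K] =i pred0.

Lemma n0 : (0 < #|G|)%N.
Proof. by apply/card_gt0P; exists 0. Qed.

Lemma nK : (#|G|%:R : K) != 0.
Proof. by rewrite ((pcharf0P K).1 charK) -lt0n n0. Qed.

Lemma A0_of g x : x \in Ag g -> g = 0 -> x \in Ag 0.
Proof. by move=> Hx e; rewrite -e. Qed.

Lemma good_u : exists u v : G -> A, forall g,
  [/\ u g \in Ag g, v g \in Ag (- g), u g * v g = 1, v g * u g = 1 &
      exists s, u g ^+ #|G| = s%:A].
Proof.
suff H : forall g, exists uv : A * A, [/\ uv.1 \in Ag g, uv.2 \in Ag (- g),
      uv.1 * uv.2 = 1, uv.2 * uv.1 = 1 & exists s, uv.1 ^+ #|G| = s%:A].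
  have [f Hf] := fin_all_exists H.
  by exists (fun g => (f g).1), (fun g => (f g).2).
move=> g.
have [u0 [v0 [Hu0 Hv0 uv0 vu0]]] := hom_unit g.
set n := #|G|.
have Sw : u0 ^+ n \in Ag 0 by apply: A0_of (homX grA n Hu0) _; apply: ordG.
have Sz : v0 ^+ n \in Ag 0.
  by apply: A0_of (homX grA n Hv0) _; rewrite mulNrn ordG oppr0.
have wz : u0 ^+ n * v0 ^+ n = 1.
  by rewrite -exprMn_comm ?uv0 ?expr1n // /GRing.comm uv0 vu0.
have nJw : u0 ^+ n \notin Jv by apply/negP => wJ; apply: unitJ wJ _ Sz wz.
have [mu [mun0 He]] := eps_decomp Sw nJw.
have [r [Sr nJr Hr]] := root_exists n0 nK He.
have [r' [Sr' rr']] := unit_A0 Sr nJr.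
have r'r : r' * r = 1 by rewrite (A0C Sr' Sr).
exists (u0 * r', r * v0); split => /=.
- by have := gr_mul grA Hu0 Sr'; rewrite addr0.
- by have := gr_mul grA Sr Hv0; rewrite add0r.
- by rewrite mulrA -(mulrA u0) r'r mulr1.
- by rewrite mulrA -(mulrA r) vu0 mulr1.
exists mu.
rewrite exprMn_comm; last by rewrite /GRing.comm (central grA regA Sr' Hu0).
have -> : u0 ^+ n = mu *: r ^+ n by rewrite Hr subrKC scalerA divff // scale1r.
rewrite -scalerAl -exprMn_comm ?rr' ?expr1n //.
exact: A0C.
Qed.

Lemma alpha_ex (u v : G -> A) :
  (forall g, [/\ u g \in Ag g, v g \in Ag (- g), u g * v g = 1, v g * u g = 1 &
      exists s, u g ^+ #|G| = s%:A]) ->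
  forall g h, exists a, u g * u h = a *: u (g + h).
Proof.
move=> Hu g h.
have [Hug Hvg uvg vug [sg Hsg]] := Hu g.
have [Huh Hvh uvh vuh [sh Hsh]] := Hu h.
have [Hugh Hvgh uvgh vugh [sgh Hsgh]] := Hu (g + h).
set n := #|G| in Hsg Hsh Hsgh.
pose c := u g * u h * v (g + h).
have Sc : c \in Ag 0.
  by apply: A0_of (gr_mul grA (gr_mul grA Hug Huh) Hvgh) _; rewrite addrN.
have cu : c * u (g + h) = u g * u h by rewrite /c -mulrA vugh mulr1.
pose d := u (g + h) * v h * v g.
have Sd : d \in Ag 0.
  apply: A0_of (gr_mul grA (gr_mul grA Hugh Hvh) Hvg) _.
  by rewrite addrK addrN.
have cd : c * d = 1.
  rewrite /d !mulrA cu -(mulrA (u g)) uvh mulr1 uvg //.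
have nJc : c \notin Jv by apply/negP => cJ; apply: unitJ cJ _ Sd cd.
have [gam Hgam] := skew_pow Hug Huh n.
have sgh0 : sgh != 0.
  apply/eqP => s0.
  have : u (g + h) ^+ n * v (g + h) ^+ n = 1.
    by rewrite -exprMn_comm ?uvgh ?expr1n // /GRing.comm uvgh vugh.
  by rewrite Hsgh s0 scale0r mul0r => /eqP; rewrite eq_sym oner_eq0.
have Hcn : c ^+ n = (sgh^-1 * (gam * (sg * sh)))%:A.
  have : c ^+ n * u (g + h) ^+ n = (gam * (sg * sh))%:A.
    rewrite -exprMn_comm; last by rewrite /GRing.comm (central grA regA Sc Hugh).
    by rewrite cu Hgam Hsg Hsh mulr_algl !scalerA mulrA.
  rewrite Hsgh mulr_algr => e.
  by rewrite -scalerA -e scalerA mulVf // scale1r.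
have [l Hl] := scalar_pow n0 nK Sc nJc Hcn.
by exists l; rewrite -cu Hl mulr_algl.
Qed.
Lemma core_data : exists (u v : G -> A) (alpha : G -> G -> K),
  (forall g, [/\ u g \in Ag g, v g \in Ag (- g), u g * v g = 1 & v g * u g = 1]) /\
  (forall g h, u g * u h = alpha g h *: u (g + h)).
Proof.
have [u [v Hu]] := good_u.
have Hal := alpha_ex Hu.
have [f Hf] : exists f : G * G -> K, forall gh, u gh.1 * u gh.2 = f gh *: u (gh.1 + gh.2).
  exact: (fin_all_exists (fun gh : G * G => Hal gh.1 gh.2)).
exists u, v, (fun g h => f (g, h)); split; last by move=> g h; apply: (Hf (g, h)).
by move=> g; have [? ? ? ? _] := Hu g.
Qed.

Section Iso.
Variables (u v : G -> A) (alpha : G -> G -> K).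
Hypothesis Huv : forall g, [/\ u g \in Ag g, v g \in Ag (- g), u g * v g = 1 & v g * u g = 1].
Hypothesis Hal : forall g h, u g * u h = alpha g h *: u (g + h).

Lemma u_mem g : u g \in Ag g. Proof. by case: (Huv g). Qed.
Lemma v_mem g : v g \in Ag (- g). Proof. by case: (Huv g). Qed.
Lemma uv g : u g * v g = 1. Proof. by case: (Huv g). Qed.
Lemma vu g : v g * u g = 1. Proof. by case: (Huv g). Qed.

Lemma u_neq0 g : u g != 0.
Proof. by apply/eqP => e; have := uv g; rewrite e mul0r => /eqP; rewrite eq_sym oner_eq0. Qed.

Lemma scal_u a b g : a *: u g = b *: u g -> a = b.
Proof.
move/eqP; rewrite -subr_eq0 -scalerBl scaler_eq0 (negPf (u_neq0 g)) orbF subr_eq0.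
by move/eqP.
Qed.

Lemma alpha_neq0 g h : alpha g h != 0.
Proof.
apply/eqP => a0.
have : u g * u h * (v h * v g) = 1 by rewrite mulrA -(mulrA (u g)) uv mulr1 uv.
by rewrite Hal a0 scale0r mul0r => /eqP; rewrite eq_sym oner_eq0.
Qed.

Lemma cocycle_alpha : cocycle alpha.
Proof.
split; first exact: alpha_neq0.
move=> g h k.
have : u g * u h * u k = u g * (u h * u k) by rewrite mulrA.
rewrite Hal -scalerAl !Hal -scalerAr !Hal !scalerA addrA.
by move/scal_u; rewrite mulrC.
Qed.

Lemma induces_alpha : induces alpha beta.
Proof.
move=> g h.
have := comm_hom regA (u_mem g) (u_mem h).
rewrite !Hal scalerA addrC => /scal_u ->.
by rewrite mulfK // alpha_neq0.
Qed.

Definition phi (f : {ffun G -> A}) := \sum_g u g * f g.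

Lemma iso_tensor : graded_iso_tensor Ag alpha (fun x => x \in Ag 0).
Proof.
exists phi; split.
- move=> c f f' _ _; rewrite /phi scaler_sumr -big_split /=.
  by apply: eq_bigr => g _; rewrite ffunE mulrDr scalerAr.
- move=> f f' Hf Hf'.
  rewrite /phi mulr_suml.
  have E g h : u g * f g * (u h * f' h) = alpha g h *: (u (g + h) * (f g * f' h)).
    rewrite mulrA -(mulrA (u g)) (central grA regA (Hf g) (u_mem h)).
    by rewrite !mulrA Hal -!scalerAl -mulrA.
  under [RHS]eq_bigr => g _.
    rewrite mulr_sumr -(sum_shift _ g).
    under eq_bigr => k _ do rewrite E [g + _]addrC subrK.
  over.
  rewrite exchange_big /=; apply: eq_bigr => k _.
  by rewrite /twmul ffunE mulr_sumr; apply: eq_bigr => g _; rewrite -scalerAr.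
- move=> f f' Hf Hf' e; apply/ffunP => g.
  have Hs : \sum_g u g * (f g - f' g) = 0.
    by rewrite (eq_bigr (fun g => u g * f g - u g * f' g)) ?sumrB -?/(phi f) ?e ?subrr // => i _; rewrite mulrBr.
  have Hm h : u h * (f h - f' h) \in Ag h.
    by have := gr_mul grA (u_mem h) (memvB (Hf h) (Hf' h)); rewrite addr0.
  have := gr_ind grA Hm Hs g => /(congr1 (fun y => v g * y)).
  by rewrite mulrA vu mul1r mulr0 => /eqP; rewrite subr_eq0 => /eqP.
- move=> a; have [e [He ->]] := gr_dec grA a.
  exists [ffun g => v g * e g]; split.
    by move=> g; rewrite ffunE; have := gr_mul grA (v_mem g) (He g); rewrite addNr.
  by rewrite /phi; apply: eq_bigr => g _; rewrite ffunE mulrA uv mul1r.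
- move=> g f Hf Hz; rewrite /phi (bigD1 g) //= big1 ?addr0.
    by have := gr_mul grA (u_mem g) (Hf g); rewrite addr0.
  by move=> h /Hz ->; rewrite mulr0.
Qed.
Lemma iso_twisted : (forall x, x \in Jv -> x = 0) -> graded_iso_twisted Ag alpha.
Proof.
move=> J0.
have [phi0 [L M I Su D]] := iso_tensor.
pose F (f : {ffun G -> K}) := [ffun g => (f g)%:A : A].
have FS f g : F f g \in Ag 0 by rewrite ffunE; apply: memvZ; apply: (one_A0 grA).
exists (fun f => phi0 (F f)); split.
- move=> c f f'; rewrite -L //.
  congr phi0; apply/ffunP => g; rewrite !ffunE.
  by rewrite scalerDl scalerA.
- move=> f f'; rewrite -M //.
  congr phi0; apply/ffunP => k; rewrite !ffunE /= scaler_suml.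
  apply: eq_bigr => g _; rewrite !ffunE.
  by rewrite mulr_algl !scalerA mulrA.
- move=> f f' e; have := I _ _ (FS f) (FS f') e.
  move=> eF; apply/ffunP => g.
  have := congr1 (fun h : {ffun G -> A} => h g) eF; rewrite !ffunE => /eqP.
  rewrite -subr_eq0 -scalerBl scaler_eq0 oner_eq0 orbF subr_eq0.
  by move/eqP.
- move=> a; have [f [Sf e]] := Su a.
  have Hc g : exists c, f g = c%:A.
    have [c Hc] := epsJ (Sf g); exists c.
    by apply/eqP; rewrite -subr_eq0; apply/eqP; apply: J0.
  have [c Hc'] := fin_all_exists Hc.
  exists [ffun g => c g]; rewrite -e; congr phi0.
  by apply/ffunP => g; rewrite !ffunE Hc'.
- move=> g f Hz; apply: D => // h /Hz.
  by rewrite ffunE => ->; rewrite scale0r.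
Qed.

End Iso.
End Jac.
Theorem theorem4p16 (K : closedFieldType) (charK0 : [pchar K] =i pred0)
    (G : finZmodType) (A : falgType K) (Ag : G -> {vspace A}) (beta : G -> G -> K) :
  graded Ag -> regular_grading Ag beta -> minimal_decomp beta ->
  local_alg (fun x : A => x \in Ag 0) ->
  ((exists x : A, jacobson (fun y : A => y \in Ag 0) x /\ x != 0) ->
     let U := fun x : A => exists (c : K) (j : A),
                jacobson (fun y : A => y \in Ag 0) j /\ x = c%:A + j in
     [/\ subalgebra U, local_alg U &
         exists alpha : G -> G -> K,
           [/\ cocycle alpha, induces alpha beta & graded_iso_tensor Ag alpha U]])
  /\
  ((forall x : A, jacobson (fun y : A => y \in Ag 0) x -> x = 0) ->
     exists alpha : G -> G -> K,
       [/\ cocycle alpha, induces alpha beta & graded_iso_twisted Ag alpha]).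
Proof.
move=> grA regA _ locA.
have lid0 : lid Ag 0%VS.
  split; first by move=> m; rewrite memv0 => /eqP ->; rewrite mem0v.
  by move=> s m _; rewrite memv0 => /eqP ->; rewrite mulr0 mem0v.
have n1 : 1 \notin (0%VS : {vspace A}) by rewrite memv0 oner_eq0.
have [Jv [maxJ _]] := exists_max grA lid0 n1.
have [u [v [alpha [Huv Hal]]]] := core_data grA locA maxJ regA charK0.
split.
- move=> _ U.
  have EU : U = (fun x => x \in Ag 0).
    apply: functional_extensionality => x; apply: propositional_extensionality; split.
      case=> c [j [[Sj _] ->]]; apply: memvD => //; apply: memvZ; apply: (one_A0 grA).
    move=> Sx; case: locA => _ /(_ x Sx) [c Jc].
    by exists c, (x - c%:A); split => //; rewrite addrC subrK.
  rewrite EU; split.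
  + split; first exact: (one_A0 grA).
    * by move=> x y; apply: memvD.
    * by move=> c x; apply: memvZ.
    * by move=> x y; apply: (A0M grA).
  + exact: locA.
  + exists alpha; split.
    * exact: cocycle_alpha Huv Hal.
    * exact: (induces_alpha regA Huv Hal).
    * exact: (iso_tensor grA regA Huv Hal).
- move=> J0; exists alpha; split.
  + exact: cocycle_alpha Huv Hal.
  + exact: (induces_alpha regA Huv Hal).
  + have J0' : forall x, x \in Jv -> x = 0 by move=> x /(memJ locA maxJ x) /J0.
    exact: (iso_twisted grA locA maxJ regA Huv Hal J0').
Qed.
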